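(* Let $G=(V,E)$ be a finite simple undirected graph and let $W\subseteq V$, $|W|\ge 2$, be a clique of $G$. Then \[ F_W:=\{x\in STAB(G)\mid x_W=1\}\subseteq STAB(G\mid W)\subseteq STAB(G). \]
   Context: For a graph $G=(V,E)$, $\mathcal S(G)\subseteq\{0,1\}^V$ is the set of characteristic vectors of stable sets of $G$, and $STAB(G)=\mathrm{conv}\,\mathcal S(G)$. For $W\subseteq V$ and $x\in\mathbb R^V$, $x_W=\sum_{v\in W}x_v$. $N(v)$ denotes the neighborhood of $v$ in $G$. The clique projection of a clique $W$ ($|W|\ge 2$) is the graph $G\mid W=(V,E\mid W)$ with $E\mid W=E\cup\{uv\notin E \mid u\neq v,\ W\subseteq N(u)\cup N(v)\}$. *)

(* Defs.v *)
From HB Require Import structures.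
From mathcomp Require Import all_boot all_order all_algebra.
Set Implicit Arguments. Unset Strict Implicit. Unset Printing Implicit Defensive.
Import Order.TTheory GRing.Theory Num.Theory.
Local Open Scope ring_scope.

Definition simple_graph (T : finType) (e : rel T) : Prop :=
  symmetric e /\ irreflexive e.

Definition nbhd (T : finType) (e : rel T) (v : T) : {set T} := [set w | e v w].

Definition stable (T : finType) (e : rel T) (S : {set T}) : bool :=
  [forall u in S, forall v in S, ~~ e u v].

Definition is_clique (T : finType) (e : rel T) (W : {set T}) : bool :=
  [forall u in W, forall v in W, (u != v) ==> e u v].

Definition chi (R : nzRingType) (T : finType) (S : {set T}) : T -> R :=
  fun v => (v \in S)%:R.

Definition stab_vecs (R : nzRingType) (T : finType) (e : rel T) (x : T -> R) : Prop :=
  exists S : {set T}, stable e S /\ x = chi R S.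

Definition conv (R : realFieldType) (T : finType) (P : (T -> R) -> Prop)
    (x : T -> R) : Prop :=
  exists (n : nat) (p : 'I_n -> T -> R) (l : 'I_n -> R),
    [/\ forall i, P (p i),
        forall i, 0 <= l i,
        \sum_(i < n) l i = 1
      & forall v, x v = \sum_(i < n) l i * p i v].

Definition STAB (R : realFieldType) (T : finType) (e : rel T) : (T -> R) -> Prop :=
  conv (stab_vecs e).

Definition xsum (R : nzRingType) (T : finType) (x : T -> R) (W : {set T}) : R :=
  \sum_(v in W) x v.

Definition clique_proj (T : finType) (e : rel T) (W : {set T}) : rel T :=
  fun u v => e u v || ((u != v) && (W \subset nbhd e u :|: nbhd e v)).

(* Main.v *)
Require Import Defs.
From mathcomp Require Import all_boot all_order all_algebra.
Import Order.TTheory GRing.Theory Num.Theory.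
Local Open Scope ring_scope.

Lemma xsum_chi (R : realFieldType) (T : finType) (S W : {set T}) :
  xsum (chi R S) W = #|W :&: S|%:R.
Proof.
rewrite /xsum /chi.
rewrite (eq_bigr (fun v => if v \in S then 1 else 0)); last first.
  by move=> v _; case: (v \in S).
rewrite -big_mkcondr /= -sumr_const.
by apply: eq_bigl => v; rewrite inE.
Qed.

Lemma card_stab_clique {T : finType} {e : rel T} {S W : {set T}} :
  irreflexive e -> stable e S -> is_clique e W -> (#|W :&: S| <= 1)%N.
Proof.
move=> irr /forallP sS /forallP cW.
apply/card_le1_eqP => u v; rewrite !inE => /andP[uW uS] /andP[vW vS].
apply/eqP; apply/negP => /negP; rewrite eq_sym => nuv.
have := cW u; rewrite uW /= => /forallP /(_ v); rewrite vW nuv /= => euv.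
have := sS u; rewrite uS /= => /forallP /(_ v); rewrite vS /= euv.
by [].
Qed.

Theorem lemma1 (R : realFieldType) (T : finType) (e : rel T) (W : {set T}) :
  simple_graph e -> is_clique e W -> (2 <= #|W|)%N ->
  (forall x : T -> R, STAB e x -> xsum x W = 1 -> STAB (clique_proj e W) x) /\
  (forall x : T -> R, STAB (clique_proj e W) x -> STAB e x).
Proof.
move=> [sym irr] cW _; split.
- move=> x [n [p [l [Pp l0 l1 xE]]]] xW.
  have cle : forall i, xsum (p i) W <= 1.
    move=> i; have [S [sS ->]] := Pp i; rewrite xsum_chi.
    by rewrite -[1]/(1%:R) ler_nat (card_stab_clique (T:=T) irr sS cW).
  have Hsum : \sum_(i < n) l i * (1 - xsum (p i) W) = 0.
    rewrite (eq_bigr (fun i => l i - l i * xsum (p i) W)); last first.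
      by move=> i _; rewrite mulrBr mulr1.
    rewrite sumrB l1 -xW /xsum.
    rewrite (eq_bigr (fun v => \sum_(i < n) l i * p i v)); last by move=> v _; rewrite xE.
    rewrite exchange_big /=.
    rewrite (eq_bigr (fun i => l i * \sum_(v in W) p i v)) ?subrr //.
    by move=> i _; rewrite mulr_sumr.
  have Z := psumr_eq0P (P := xpredT) (fun i _ => mulr_ge0 (l0 i) (eq_ind_r is_true (cle i) (subr_ge0 _ _))) Hsum.
  exists n, (fun i => if l i == 0 then chi R set0 else p i), l; split => //.
  + move=> i; case: eqP => li0.
      exists set0; split => //; apply/forallP => u; apply/implyP; by rewrite inE.
    have [S [sS pE]] := Pp i.
    have := Z i isT; move/eqP; rewrite mulf_eq0 (introF eqP li0) /= subr_eq0 => /eqP c1.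
    have : (0 < #|W :&: S|)%N.
      by move: c1; rewrite pE xsum_chi; case: #|_| => [|k] // /eqP; rewrite mulr0n oner_eq0.

    case/card_gt0P => w; rewrite inE => /andP[wW wS].
    exists S; split => //.
    move/forallP: sS => sS; apply/forallP => u; apply/implyP => uS.
    apply/forallP => v; apply/implyP => vS.
    rewrite /clique_proj negb_or.
    have := sS u; rewrite uS /= => /forallP sSu.
    have := sS v; rewrite vS /= => /forallP sSv.
    have := sSu v; rewrite vS /= => -> /=.
    rewrite negb_and; apply/orP; right; apply/negP => /subsetP /(_ w wW).
    rewrite !inE => /orP[].
      by have := sSu w; rewrite wS /= => /negP.
    by have := sSv w; rewrite wS /= => /negP.
  + move=> v; rewrite xE; apply: eq_bigr => i _.
    by case: eqP => // ->; rewrite !mul0r.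
- move=> x [n [p [l [Pp l0 l1 xE]]]].
  exists n, p, l; split => // i.
  have [S [sS pE]] := Pp i; exists S; split => //.
  move/forallP: sS => sS; apply/forallP => u; apply/implyP => uS.
  apply/forallP => v; apply/implyP => vS.
  have := sS u; rewrite uS /= => /forallP /(_ v); rewrite vS /= /clique_proj negb_or.
  by case/andP.
Qed.
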